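(* Let $\mathcal E=\widetilde{\Omega^1_D}(\mathcal A)$ be the bimodule of one-forms of a spectral triple $(\mathcal A,\mathcal H,D)$. Suppose $\mathcal E$ is free of finite rank as a right $\mathcal A$-module, $\mathcal E=\mathbb C^n\otimes_{\mathbb C}\mathcal A$, with left module structure $a(e_i\otimes b)=e_i\otimes ab$ for a basis $e_1,\dots,e_n$ of $\mathbb C^n$ and $a,b\in\mathcal A$. Then $\mathcal E$ satisfies Assumption III.
   Context: $\mathcal E$ is the span in $B(\mathcal H)$ of $a[D,b]$; $\mathcal Z(\mathcal E)=\{e:ea=ae\ \forall a\in\mathcal A\}$, $\mathcal Z(\mathcal A)$ the center of $\mathcal A$. Assumption III: $\mathcal Z(\mathcal E)$ is finitely generated projective over $\mathcal Z(\mathcal A)$ and the map $\mathcal Z(\mathcal E)\otimes_{\mathcal Z(\mathcal A)}\mathcal A\to\mathcal E$, $e\otimes a\mapsto ea$, is an isomorphism of vector spaces. *)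

(* Defs.v *)
From HB Require Import structures.
From mathcomp Require Import all_boot all_order all_algebra.
From mathcomp Require Import complex.
From mathcomp Require Import reals.
Set Implicit Arguments. Unset Strict Implicit. Unset Printing Implicit Defensive.
Import Order.TTheory GRing.Theory Num.Theory.
Local Open Scope ring_scope.

Section Defs.
(* C : the scalars (in the theorem, the complex numbers R[i]);
   B : a C-algebra standing for B(H).  Subsets of B are predicates B -> Prop. *)
Variables (C : comNzRingType) (B : algType C).

Definition unital_subalg (A : B -> Prop) : Prop :=
  [/\ A 1, forall c x, A x -> A (c *: x),
      forall x y, A x -> A y -> A (x + y) &
      forall x y, A x -> A y -> A (x * y)].

(* d b plays the role of the commutator [D,b] (b in A): it is C-linear
   on A and satisfies the Leibniz rule [D,bc] = [D,b]c + b[D,c]. *)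
Definition commutator_like (A : B -> Prop) (d : B -> B) : Prop :=
  [/\ forall c x, A x -> d (c *: x) = c *: d x,
      forall x y, A x -> A y -> d (x + y) = d x + d y &
      forall x y, A x -> A y -> d (x * y) = d x * y + x * d y].

(* E = span in B of the a [D,b], a, b in A (scalars are absorbed in a) *)
Definition oneforms (A : B -> Prop) (d : B -> B) : B -> Prop :=
  fun e => exists s : seq (B * B)%type,
      (forall p, p \in s -> A p.1 /\ A p.2) /\
      e = \sum_(p <- s) p.1 * d p.2.

Definition centralizer_in (A E : B -> Prop) : B -> Prop :=
  fun e => E e /\ forall a, A a -> e * a = a * e.

Definition center_of (A : B -> Prop) : B -> Prop := centralizer_in A A.

(* E is free of finite rank as a right A-module, E = C^n (x)_C A (= A^n), with
   left structure a (e_i (x) b) = e_i (x) ab: phi is a C-linear bijection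
   A^n -> E which is a morphism of A-bimodules, A acting on A^n by
   multiplication in each coordinate on both sides.  (Elements of A^n are
   functions 'I_n -> B with values in A.) *)
Definition free_diag_bimodule (A E : B -> Prop) : Prop :=
  exists n : nat, exists phi : ('I_n -> B) -> B,
  [/\ forall f, (forall i, A (f i)) -> E (phi f),
      forall f g, (forall i, A (f i)) -> (forall i, A (g i)) ->
        phi (fun i => f i + g i) = phi f + phi g &
      forall c f, (forall i, A (f i)) -> phi (fun i => c *: f i) = c *: phi f]
  /\ [/\ forall f b, (forall i, A (f i)) -> A b ->
        phi (fun i => f i * b) = phi f * b,
      forall a f, A a -> (forall i, A (f i)) ->
        a * phi f = phi (fun i => a * f i),
      forall f g, (forall i, A (f i)) -> (forall i, A (g i)) ->
        phi f = phi g -> forall i, f i = g i &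
      forall e, E e -> exists2 f, (forall i, A (f i)) & phi f = e].

(* M (a subset of B, a module over the commutative ring Z subset of B acting
   by right multiplication) is finitely generated projective over Z: it is a
   direct summand of a free module Z^m of finite rank, i.e. there are
   Z-linear maps pi : Z^m -> M and s : M -> Z^m with pi o s = id_M. *)
Definition fg_projective (Z M : B -> Prop) : Prop :=
  exists m : nat, exists pi : ('I_m -> B) -> B, exists s : B -> ('I_m -> B),
  [/\ forall u, (forall i, Z (u i)) -> M (pi u),
      forall u v, (forall i, Z (u i)) -> (forall i, Z (v i)) ->
        pi (fun i => u i + v i) = pi u + pi v &
      forall u z, (forall i, Z (u i)) -> Z z ->
        pi (fun i => u i * z) = pi u * z]
  /\ [/\ forall e i, M e -> Z (s e i),
      forall e e', M e -> M e' -> s (e + e') = (fun i => s e i + s e' i),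
      forall e z, M e -> Z z -> s (e * z) = (fun i => s e i * z) &
      forall e, M e -> pi (s e) = e].

Definition balanced (Z M A : B -> Prop) (V : zmodType) (beta : B -> B -> V)
  : Prop :=
  [/\ forall e e' a, M e -> M e' -> A a ->
        beta (e + e') a = beta e a + beta e' a,
      forall e a a', M e -> A a -> A a' ->
        beta e (a + a') = beta e a + beta e a' &
      forall e z a, M e -> Z z -> A a ->
        beta (e * z) a = beta e (z * a)].

(* The map M (x)_Z A -> E, e (x) a |-> e a, is well defined (lands in E) and
   is an isomorphism, stated through the universal property of the tensor
   product: every Z-balanced biadditive map beta out of M x A factors
   uniquely as beta e a = f (e a) with f additive on E. *)
Definition mult_map_iso (Z M A E : B -> Prop) : Prop :=
  (forall e a, M e -> A a -> E (e * a)) /\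
  forall (V : zmodType) (beta : B -> B -> V), balanced Z M A beta ->
    (exists f : B -> V,
        (forall x y, E x -> E y -> f (x + y) = f x + f y) /\
        (forall e a, M e -> A a -> f (e * a) = beta e a)) /\
    (forall f g : B -> V,
        (forall x y, E x -> E y -> f (x + y) = f x + f y) ->
        (forall x y, E x -> E y -> g (x + y) = g x + g y) ->
        (forall e a, M e -> A a -> f (e * a) = beta e a) ->
        (forall e a, M e -> A a -> g (e * a) = beta e a) ->
        forall x, E x -> f x = g x).

Definition assumption_III (A E : B -> Prop) : Prop :=
  fg_projective (center_of A) (centralizer_in A E) /\
  mult_map_iso (center_of A) (centralizer_in A E) A E.

End Defs.

(* Main.v *)
Require Import Defs.
From HB Require Import structures.
From mathcomp Require Import all_boot all_order all_algebra.
From mathcomp Require Import complex.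
From mathcomp Require Import reals.
From Stdlib Require Import ClassicalEpsilon FunctionalExtensionality.
Import GRing.Theory.
Local Open Scope ring_scope.

Lemma sum_hom (B : zmodType) (V : zmodType) (I : Type) (P : B -> Prop) (h : B -> V)
  (r : seq I) (x : I -> B) :
  P 0 -> (forall u v, P u -> P v -> P (u + v)) ->
  (forall u v, P u -> P v -> h (u + v) = h u + h v) ->
  (forall i, P (x i)) ->
  P (\sum_(i <- r) x i) /\ h (\sum_(i <- r) x i) = \sum_(i <- r) h (x i).
Proof.
move=> P0 PD hD Px.
have h0 : h 0 = 0.
  have H := hD 0 0 P0 P0; rewrite addr0 in H.
  apply/(addrI (h 0)); by rewrite addr0 -H.
elim: r => [|a r [IHP IHh]]; rewrite ?big_nil ?big_cons; split => //.
  exact: PD.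
by rewrite hD // IHh.
Qed.

Lemma main_gen (C : comNzRingType) (B : algType C) (A E : B -> Prop) :
  unital_subalg A -> free_diag_bimodule A E -> assumption_III A E.
Proof.
move=> [A1 AZ AD AM] [n [phi [[PE Padd Pscal] [Pr Pl Pinj Psurj]]]].
have A0 : A 0 by rewrite -(scale0r (1 : B)); exact: AZ.
have phi0 : phi (fun _ => 0) = 0.
  have H := Padd (fun _ => 0) (fun _ => 0) (fun _ => A0) (fun _ => A0).
  have e : (fun _ : 'I_n => (0:B) + 0) = (fun _ => 0).
    by apply: functional_extensionality => i; rewrite addr0.
  rewrite e in H. apply/(addrI (phi (fun _ => 0))). by rewrite addr0 -H.
have E0 : E 0 by rewrite -phi0; apply: PE.
have ED : forall x y, E x -> E y -> E (x + y).
  move=> x y /Psurj [f Af <-] /Psurj [g Ag <-]; rewrite -Padd //; apply: PE => i; exact: AD.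
have EM : forall x a, E x -> A a -> E (x * a).
  move=> x a /Psurj [f Af <-] Aa; rewrite -Pr //; apply: PE => i; exact: AM.
pose s (e : B) : 'I_n -> B := epsilon (inhabits (fun _ => 0))
   (fun f => (forall i, A (f i)) /\ phi f = e).
have sP : forall e, E e -> (forall i, A (s e i)) /\ phi (s e) = e.
  move=> e /Psurj [f Af fe].
  exact: (epsilon_spec (inhabits (fun _ => 0)) (fun f => (forall i, A (f i)) /\ phi f = e) (ex_intro _ f (conj Af fe))).
have sD : forall x y, E x -> E y -> s (x + y) = (fun i => s x i + s y i).
  move=> x y Ex Ey; have [Ax px] := sP x Ex; have [Ay py] := sP y Ey.
  have [Axy pxy] := sP _ (ED _ _ Ex Ey).
  apply: functional_extensionality; apply: Pinj => //.
  - by move=> i; apply: AD.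
  - by rewrite Padd // pxy px py.
have sM : forall x a, E x -> A a -> s (x * a) = (fun i => s x i * a).
  move=> x a Ex Aa; have [Ax px] := sP x Ex.
  have [Axa pxa] := sP _ (EM _ _ Ex Aa).
  apply: functional_extensionality; apply: Pinj => //.
  - by move=> i; apply: AM.
  - by rewrite Pr // pxa px.
have sZ : forall e i, centralizer_in A E e -> center_of A (s e i).
  move=> e i [Ee Ce]; have [Ae pe] := sP e Ee; split => // b Ab.
  have := Pinj (fun i => s e i * b) (fun i => b * s e i).
  apply => //; [by move=> j; apply: AM | by move=> j; apply: AM | ].
  by rewrite Pr // -Pl // pe Ce.
have piZ : forall u, (forall i, center_of A (u i)) -> centralizer_in A E (phi u).
  move=> u Zu; have Au : forall i, A (u i) by move=> i; case: (Zu i).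
  split; first exact: PE.
  move=> a Aa; rewrite -Pr // Pl //; congr phi; apply: functional_extensionality => i.
  by case: (Zu i) => _ ->.
have ZED : forall x y, centralizer_in A E x -> centralizer_in A E y ->
    centralizer_in A E (x + y).
  move=> x y [Ex Cx] [Ey Cy]; split; first exact: ED.
  by move=> a Aa; rewrite mulrDl mulrDr Cx // Cy.
have ZE0 : centralizer_in A E 0 by split => // a _; rewrite mul0r mulr0.
have ZEmul : forall x z, centralizer_in A E x -> center_of A z ->
    centralizer_in A E (x * z).
  move=> x z [Ex Cx] [Az Cz]; split; first exact: EM.
  by move=> a Aa; rewrite -mulrA Cz // mulrA Cx // mulrA.
pose delta (i : 'I_n) : 'I_n -> B := fun j => if j == i then 1 else 0.
have Adelta : forall i j, center_of A (delta i j).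
  move=> i j; rewrite /delta; case: (j == i); split => // a _;
    by rewrite ?mul1r ?mulr1 ?mul0r ?mulr0.
have Ad : forall i j, A (delta i j) by move=> i j; case: (Adelta i j).
have phi_sum : forall (r : seq 'I_n) (g : 'I_n -> 'I_n -> B), (forall i j, A (g i j)) ->
   (forall j, A (\sum_(i <- r) g i j)) /\
   phi (fun j => \sum_(i <- r) g i j) = \sum_(i <- r) phi (g i).
  move=> r g Ag; elim: r => [|a r [IA IP]].
    split=> [j|]; first by rewrite big_nil.
    have -> : (fun j => \sum_(i <- [::]) g i j) = (fun _ => 0).
      by apply: functional_extensionality => j; rewrite big_nil.
    by rewrite phi0 big_nil.
  split=> [j|]; first by rewrite big_cons; apply: AD.
  have -> : (fun j => \sum_(i <- a :: r) g i j) = (fun j => g a j + \sum_(i <- r) g i j).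
    by apply: functional_extensionality => j; rewrite big_cons.
  by rewrite Padd // IP big_cons.
have decomp : forall h, (forall i, A (h i)) -> phi h = \sum_(i < n) phi (delta i) * h i.
  move=> h Ah.
  transitivity (phi (fun j => \sum_(i < n) delta i j * h i)).
    congr phi; apply: functional_extensionality => j.
    rewrite (bigD1 j) //= /delta eqxx mul1r big1 ?addr0 // => i ne.
    by rewrite eq_sym (negbTE ne) mul0r.
  have [_ /= ->] := phi_sum (index_enum 'I_n) (fun i j => delta i j * h i)
     (fun i j => AM _ _ (Ad i j) (Ah i)).
  apply: eq_bigr => i _; exact: (Pr (delta i) (h i) (Ad i) (Ah i)).
have key : forall x, E x -> x = \sum_(i < n) phi (delta i) * s x i.
  move=> x Ex; have [Ax px] := sP x Ex; by rewrite -{1}px decomp.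
have PZd : forall i, centralizer_in A E (phi (delta i)).
  by move=> i; apply: piZ => j; apply: Adelta.
split.
  exists n, phi, s; split; split.
  - by move=> u Zu; apply: piZ.
  - by move=> u v Zu Zv; apply: Padd => i; [case: (Zu i)|case: (Zv i)].
  - by move=> u z Zu [Az _]; apply: Pr => // i; case: (Zu i).
  - by move=> e i Ze; apply: sZ.
  - by move=> e e' [Ee _] [Ee' _]; apply: sD.
  - by move=> e z [Ee _] [Az _]; apply: sM.
  - by move=> e [Ee _]; case: (sP e Ee).
split.
  by move=> e a [Ee _] Aa; apply: EM.
move=> V beta [bD1 bD2 bB].
split.
  exists (fun x => \sum_(i < n) beta (phi (delta i)) (s x i)); split.
    move=> x y Ex Ey; rewrite sD // -big_split /=; apply: eq_bigr => i _.
    apply: bD2 => //; [case: (sP x Ex) | case: (sP y Ey)] => H _; exact: H.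
  move=> e a Ze Aa; have [Ee _] := Ze.
  rewrite sM //.
  have -> : beta e a = beta (\sum_(i < n) phi (delta i) * s e i) a by congr (beta _ a); exact: key.
  have [_ ->] := @sum_hom _ _ _ (centralizer_in A E) (fun x => beta x a)
     (index_enum 'I_n) (fun i => phi (delta i) * s e i) ZE0 ZED
     (fun u v Pu Pv => bD1 u v a Pu Pv Aa) (fun i => ZEmul _ _ (PZd i) (sZ e i Ze)).
  apply: eq_bigr => i _ /=; rewrite bB //; exact: sZ.
move=> f g fD gD fb gb x Ex.
have [Ax _] := sP x Ex.
have Et : forall i, E (phi (delta i) * s x i).
  by move=> i; apply: EM => //; case: (PZd i).
have -> : f x = f (\sum_(i < n) phi (delta i) * s x i) by congr f; exact: key.
have -> : g x = g (\sum_(i < n) phi (delta i) * s x i) by congr g; exact: key.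
have [_ ->] := @sum_hom _ _ _ E f (index_enum 'I_n) _ E0 ED fD Et.
have [_ ->] := @sum_hom _ _ _ E g (index_enum 'I_n) _ E0 ED gD Et.
by apply: eq_bigr => i _; rewrite fb // gb.
Qed.

Theorem corollary4p18 (R : realType) (B : algType R[i]) (A : B -> Prop)
    (d : B -> B) :
  unital_subalg A -> commutator_like A d ->
  free_diag_bimodule A (oneforms A d) ->
  assumption_III A (oneforms A d).
Proof.
move=> HA _ Hf; exact: main_gen HA Hf.
Qed.
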